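(* Let $\mathcal V$ be a multivector field on $X$ and let $S$ be an isolated invariant set. Then $(\operatorname{cl}S,\operatorname{mo}S)$ is a saturated index pair for $S$.
   Context: $X$ is a finite $T_0$ topological space. For $A\subset X$, $\operatorname{cl}A$ is its closure and $\operatorname{mo}A:=\operatorname{cl}A\setminus A$. $A$ is locally closed if it is the intersection of an open and a closed subset of $X$. $H$ denotes relative singular homology. A multivector is a nonempty locally closed subset of $X$; a multivector field $\mathcal V$ on $X$ is a partition of $X$ into multivectors. For $x\in X$, $[x]$ denotes the element of $\mathcal V$ containing $x$. A multivector $V$ is critical if $H(\operatorname{cl}V,\operatorname{mo}V)\neq0$, regular otherwise. Put $\Pi_{\mathcal V}(x):=[x]\cup\operatorname{cl}\{x\}$ and $\Pi_{\mathcal V}(A):=\bigcup_{x\in A}\Pi_{\mathcal V}(x)$. A $\mathbb Z$-interval is $\mathbb Z\cap I$ for a real interval $I$. A solution in $A\subset X$ is a map $\varphi:D\to A$ on a $\mathbb Z$-interval $D$ with $\varphi(i+1)\in\Pi_{\mathcal V}(\varphi(i))$ whenever $i,i+1\in D$; it is full if $D=\mathbb Z$, and a path if $D$ is bounded, its endpoints being $\varphi(\min D)$ and $\varphi(\max D)$. A full solution $\varphi$ is essential if for every $t\in\mathbb Z$ with $[\varphi(t)]$ regular, the set $\{s\in\mathbb Z:\varphi(s)\notin[\varphi(t)]\}$ is unbounded below and unbounded above. $\operatorname{Inv}A$ is the set of $x\in A$ such that there is an essential full solution $\varphi$ with image in $A$ and $\varphi(0)=x$; $A$ is invariant if $\operatorname{Inv}A=A$.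 A closed set $N$ isolates an invariant set $S\subset N$ if (a) every path in $N$ with both endpoints in $S$ has image contained in $S$, and (b) $\Pi_{\mathcal V}(S)\subset N$. An invariant set is an isolated invariant set if some closed set isolates it. An index pair for an isolated invariant set $S$ is a pair $(P_1,P_2)$ of closed subsets of $X$ with $P_2\subset P_1$ such that (IP1) if $x\in P_2$ and $y\in\Pi_{\mathcal V}(x)\cap P_1$ then $y\in P_2$; (IP2) if $x\in P_1$ and $\Pi_{\mathcal V}(x)\setminus P_1\neq\emptyset$ then $x\in P_2$; (IP3) $S=\operatorname{Inv}(P_1\setminus P_2)$. It is saturated if $S=P_1\setminus P_2$. *)

(* Defs.v *)
From HB Require Import structures.
From mathcomp Require Import all_boot all_order all_algebra.
Set Implicit Arguments. Unset Strict Implicit. Unset Printing Implicit Defensive.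
Import Order.TTheory GRing.Theory Num.Theory.

Section FiniteSpaces.
Variable T : finType.

Definition is_topology (opens : {set {set T}}) : Prop :=
  [/\ set0 \in opens, [set: T] \in opens,
      (forall A B, A \in opens -> B \in opens -> A :|: B \in opens) &
      (forall A B, A \in opens -> B \in opens -> A :&: B \in opens)].

Definition T0 (opens : {set {set T}}) : Prop :=
  forall x y : T, x != y ->
    exists2 U, U \in opens & (x \in U) != (y \in U).

Variable opens : {set {set T}}.

Definition is_closed (A : {set T}) : bool := ~: A \in opens.

Definition cl (A : {set T}) : {set T} :=
  \bigcap_(C | is_closed C && (A \subset C)) C.

Definition mo (A : {set T}) : {set T} := cl A :\: A.

Definition locally_closed (A : {set T}) : Prop :=
  exists U C, [/\ U \in opens, is_closed C & A = U :&: C].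

Definition multivector_field (V : {set {set T}}) : Prop :=
  partition V [set: T] /\ (forall M, M \in V -> locally_closed M).

Variable V : {set {set T}}.

Definition mv (x : T) : {set T} := pblock V x.

Definition Pi (x : T) : {set T} := mv x :|: cl [set x].

Definition PiS (A : {set T}) : {set T} := \bigcup_(x in A) Pi x.

Definition is_path_in (A : {set T}) (phi : int -> T) (a b : int) : Prop :=
  (a <= b)%R /\
  (forall i : int, (a <= i)%R -> (i <= b)%R -> phi i \in A) /\
  (forall i : int, (a <= i)%R -> (i < b)%R -> phi (i + 1)%R \in Pi (phi i)).

Definition full_solution_in (A : {set T}) (phi : int -> T) : Prop :=
  (forall i : int, phi i \in A) /\
  (forall i : int, phi (i + 1)%R \in Pi (phi i)).

Variable critical : {set T} -> Prop.

Definition regular (M : {set T}) : Prop := ~ critical M.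

Definition essential (phi : int -> T) : Prop :=
  forall t : int, regular (mv (phi t)) ->
    (forall n : int, exists s : int, (s < n)%R /\ phi s \notin mv (phi t)) /\
    (forall n : int, exists s : int, (n < s)%R /\ phi s \notin mv (phi t)).

Definition Inv (A : {set T}) (x : T) : Prop :=
  x \in A /\
  exists phi : int -> T, [/\ full_solution_in A phi, essential phi & phi 0%R = x].

Definition invariant (A : {set T}) : Prop := forall x, x \in A <-> Inv A x.

Definition isolates (N S : {set T}) : Prop :=
  [/\ is_closed N, S \subset N,
      (forall (phi : int -> T) (a b : int), is_path_in N phi a b ->
          phi a \in S -> phi b \in S ->
          forall i : int, (a <= i)%R -> (i <= b)%R -> phi i \in S) &
      PiS S \subset N].

Definition isolated_invariant (S : {set T}) : Prop :=
  invariant S /\ exists N, isolates N S.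

Definition index_pair (S P1 P2 : {set T}) : Prop :=
  [/\ is_closed P1 /\ is_closed P2 /\ P2 \subset P1,
      (forall x y, x \in P2 -> y \in Pi x :&: P1 -> y \in P2),
      (forall x, x \in P1 -> Pi x :\: P1 != set0 -> x \in P2) &
      (forall x, x \in S <-> Inv (P1 :\: P2) x)].

Definition saturated_index_pair (S P1 P2 : {set T}) : Prop :=
  index_pair S P1 P2 /\ S = P1 :\: P2.

End FiniteSpaces.

(* Main.v *)
Require Import Defs.
From HB Require Import structures.
From mathcomp Require Import all_boot all_order all_algebra.
From mathcomp Require Import zify.
Set Implicit Arguments. Unset Strict Implicit. Unset Printing Implicit Defensive.
Import Order.TTheory GRing.Theory Num.Theory.

Section Aux.
Variable T : finType.
Variable opens : {set {set T}}.
Hypothesis Htop : is_topology opens.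

Lemma closed_setU (A B : {set T}) : is_closed opens A -> is_closed opens B -> is_closed opens (A :|: B).
Proof. case: Htop => _ _ HU HI; rewrite /is_closed setCU; exact: HI. Qed.

Lemma closed_set0 : is_closed opens set0.
Proof. case: Htop => _ HT _ _; by rewrite /is_closed setC0. Qed.

Lemma closed_cl (A : {set T}) : is_closed opens (cl opens A).
Proof.
case: Htop => H0 _ HU _; rewrite /is_closed /cl setC_bigcap.
by apply: (big_ind (fun X => X \in opens)) => // C /andP[].
Qed.

Lemma sub_cl (A : {set T}) : A \subset cl opens A.
Proof. by apply/bigcapsP => C /andP[]. Qed.

Lemma cl_min (A C : {set T}) : is_closed opens C -> A \subset C -> cl opens A \subset C.
Proof. move=> hC hA; apply: bigcap_inf; by rewrite hC hA. Qed.

Lemma clP (A : {set T}) (y : T) : reflect (exists2 a, a \in A & y \in cl opens [set a]) (y \in cl opens A).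
Proof.
apply: (iffP idP).
- move=> hy.
  have hU : cl opens A \subset \bigcup_(a in A) cl opens [set a].
    apply: cl_min.
      apply: (big_ind (fun X => is_closed opens X)).
      + exact: closed_set0.
      + exact: closed_setU.
      + move=> a _; exact: closed_cl.
    apply/subsetP => a ha; apply/bigcupP; exists a => //.
    by apply: (subsetP (sub_cl _)); rewrite in_set1.
  by move/subsetP: hU => /(_ y hy) /bigcupP[a ha hya]; exists a.
- case=> a ha hya; move: hya; apply/subsetP; apply: cl_min; first exact: closed_cl.
  apply/subsetP => z; rewrite in_set1 => /eqP ->; exact: (subsetP (sub_cl _)).
Qed.

Variable V : {set {set T}}.
Variable critical : {set T} -> Prop.

Lemma iso3 (N S : {set T}) (a b c : T) : isolates opens V N S -> a \in S -> c \in S -> b \in N ->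
  b \in Pi opens V a -> c \in Pi opens V b -> b \in S.
Proof.
case=> _ sSN Hp _ aS cS bN hab hbc.
have aN := subsetP sSN a aS; have cN := subsetP sSN c cS.
pose phi := fun i : int => if i == 0%R then a else if i == 1%R then b else c.
have e10 : ((1:int) == 0) = false by [].
have e20 : ((2:int) == 0) = false by [].
have e21 : ((2:int) == 1) = false by [].
have := Hp phi 0%R 2%R _ _ _ 1%R.
rewrite /phi e10 eqxx; apply => //=.
split; first by []. split.
- move=> i h1 h2; have : i = 0 \/ i = 1 \/ i = 2 by lia.
  by case=> [->|[->|->]]; rewrite ?eqxx ?e10 ?e20 ?e21.
- move=> i h1 h2; have : i = 0 \/ i = 1 by lia.
  by case=> ->; rewrite ?add0r ?eqxx ?e10 ?e20 ?e21.
Qed.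

End Aux.

Theorem proposition5p3 (T : finType) (opens : {set {set T}})
  (Htop : is_topology opens) (HT0 : T0 opens)
  (V : {set {set T}}) (HV : multivector_field opens V)
  (critical : {set T} -> Prop)
  (S : {set T}) (HS : isolated_invariant opens V critical S) :
  saturated_index_pair opens V critical S (cl opens S) (mo opens S).
Proof.
case: HS => Hinv [N HN].
have HN' := HN; case: HN' => Ncl sSN Hp PiSN.
case: HV => Hpart _.
have sScl := sub_cl opens S.
have PiN : forall x y, x \in S -> y \in Pi opens V x -> y \in N.
  move=> x y xS yP; apply: (subsetP PiSN); apply/bigcupP; by exists x.
have cl1P : forall x z, z \in cl opens [set x] -> z \in Pi opens V x.
  by move=> x z h; rewrite /Pi inE h orbT.
have cl1t : forall x z, z \in cl opens [set x] -> cl opens [set z] \subset cl opens [set x].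
  move=> x z h; apply: cl_min => //; first exact: closed_cl.
  by apply/subsetP => w; rewrite in_set1 => /eqP ->.
have convex : forall x z y, x \in S -> z \in cl opens [set x] ->
    y \in cl opens [set z] -> y \in S -> z \in S.
  move=> x z y xS zx yz yS; apply: (iso3 HN xS yS) => //.
  - exact: (PiN x z xS (cl1P _ _ zx)).
  - exact: (cl1P _ _ zx).
  - exact: (cl1P _ _ yz).
have compat : forall x y, x \in S -> y \in mv V x -> y \in S.
  move=> x y xS yx; apply: (iso3 HN xS xS).
  - by apply: (PiN x) => //; rewrite /Pi inE yx.
  - by rewrite /Pi inE yx.
  - rewrite /Pi inE; apply/orP; left.
    case/andP: Hpart => /eqP cov /andP[triv _].
    have xc : x \in cover V by rewrite cov inE.
    rewrite /mv -(@eq_pblock _ V x y triv xc) in yx.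
    by rewrite /mv -(eqP yx) mem_pblock.
have eqS : cl opens S :\: mo opens S = S.
  apply/setP => x; rewrite /mo !inE.
  case xS: (x \in S); rewrite ?andbT ?andbF //=.
  - exact: (subsetP sScl).
  - by case: (x \in cl opens S).
have mocl : cl opens (mo opens S) \subset mo opens S.
  apply/subsetP => y /(clP Htop) [z zmo yz].
  move: zmo; rewrite /mo inE => /andP[znS zcl].
  have /(clP Htop) [x xS zx] := zcl.
  rewrite inE; apply/andP; split.
  - apply/negP => yS; by rewrite (convex x z y xS zx yz yS) in znS.
  - apply/(clP Htop); exists x => //; exact: (subsetP (cl1t _ _ zx)).
split; last by rewrite eqS.
split.
- split; first exact: closed_cl.
  split; last by apply/subsetP => x; rewrite /mo inE => /andP[].
  have -> : mo opens S = cl opens (mo opens S).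
    by apply/eqP; rewrite eqEsubset mocl sub_cl.
  exact: closed_cl.
- move=> x y; rewrite /mo inE => /andP[xnS xcl] /setIP[yP ycl].
  rewrite inE
  ycl andbT; apply/negP => yS.
  have /(clP Htop) [s sS xs] := xcl.
  have := iso3 HN sS yS (PiN s x sS (cl1P _ _ xs)) (cl1P _ _ xs) yP.
  by rewrite (negbTE xnS).
- move=> x xcl hne; rewrite /mo inE xcl andbT; apply/negP => xS.
  move/negP: hne; apply; rewrite setD_eq0; apply/subsetP => y.
  rewrite /Pi inE => /orP[ym|yc].
  + exact: (subsetP sScl _ (compat x y xS ym)).
  + by apply/(clP Htop); exists x.
- by rewrite eqS.
Qed.
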